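(* In the setting described in the context, for $n\ge1$ let $u_n=\min\{x\in[d,v]: f^{2n}(x)=d\}$, and for $n\ge1$, $i\ge1$ let $u'_{n,i}=\max\{x\in[u_{n+1},u_n]: f^{2n+2i}(x)=d\}$ (these sets are nonempty). Then for each $n\ge1$ and $i\ge1$, on the interval $[u'_{n,i},u_n]$ the map $f$ has no periodic points whose least period is odd and $\le 2n+2i+1$, and no periodic points whose least period is even and $\le 2n+2i$ except points of least period $2n+2i$ and possibly points of least period $2n$.
   Context: Let $I$ be a compact interval and $f:I\to I$ continuous; $f^1=f$, $f^n=f\circ f^{n-1}$. A point $x_0$ is a periodic point of least period $k$ (a period-$k$ point) if $f^k(x_0)=x_0$ and $f^i(x_0)\ne x_0$ for $0<i<k$. Let $m\ge3$ be odd and let $P$ be a periodic orbit of $f$ of least period $m$. Put $e=f^{m-1}(\min P)$. Let $v\in[\min P,e)$ be a point with $f(v)=e$, and let $z\in(v,e)$ be a fixed point of $f$ (such points exist). Define $z_0=\min\{x\in[v,z]: f^2(x)=x\}$ and $d=\max\{x\in[\min P,v]: f^2(x)=z_0\}$ (both sets are nonempty). *)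

(* Defs.v *)
From Stdlib Require Import Reals Lra Lia.
Open Scope R_scope.

Definition iter (f : R -> R) (n : nat) (x : R) : R := Nat.iter n f x.

(* f : I -> I continuous on the compact interval I = [a,b] (f is given as a
   function on R, only its values on [a,b] matter). *)
Definition maps_into (f : R -> R) (a b : R) : Prop :=
  forall x, a <= x <= b -> a <= f x <= b.

Definition continuous_on (f : R -> R) (a b : R) : Prop :=
  forall x, a <= x <= b -> forall eps, 0 < eps ->
    exists delta, 0 < delta /\
      forall y, a <= y <= b -> Rabs (y - x) < delta -> Rabs (f y - f x) < eps.

Definition least_period (f : R -> R) (k : nat) (x0 : R) : Prop :=
  (0 < k)%nat /\ iter f k x0 = x0 /\
  forall i : nat, (0 < i < k)%nat -> iter f i x0 <> x0.

Definition is_min (S : R -> Prop) (m : R) : Prop := S m /\ forall y, S y -> m <= y.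
Definition is_max (S : R -> Prop) (m : R) : Prop := S m /\ forall y, S y -> y <= m.

(* Main.v *)
Require Import Defs.
From Stdlib Require Import Reals Lra Lia.
Open Scope R_scope.

Definition clamp (a b x : R) := Rmax a (Rmin b x).

Lemma clamp_in a b x : a <= b -> a <= clamp a b x <= b.
Proof. intros. unfold clamp, Rmax, Rmin. repeat destruct Rle_dec; lra. Qed.

Lemma clamp_id a b x : a <= x <= b -> clamp a b x = x.
Proof. intros. unfold clamp, Rmax, Rmin. repeat destruct Rle_dec; lra. Qed.

Lemma clamp_lip a b x y : a <= b -> Rabs (clamp a b x - clamp a b y) <= Rabs (x - y).
Proof. intros. unfold clamp, Rmax, Rmin. repeat destruct Rle_dec; unfold Rabs; repeat destruct Rcase_abs; lra. Qed.

Lemma ivt (h : R -> R) a b l r y :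
  a <= b -> continuous_on h a b -> a <= l -> l <= r -> r <= b ->
  (h l - y) * (h r - y) <= 0 -> exists c, l <= c <= r /\ h c = y.
Proof.
  intros Hab Hc Hal Hlr Hrb Hs.
  set (F := fun t => h (clamp a b t) - y).
  assert (HF : continuity F).
  { intros x0. unfold continuity_pt, continue_in, limit1_in, limit_in. simpl.
    intros eps Heps.
    destruct (Hc (clamp a b x0) (clamp_in a b x0 Hab) eps Heps) as [del [Hdel Hd]].
    exists del. split; [exact Hdel|]. intros x1 [_ Hx1]. unfold R_dist in *.
    unfold F. replace (h (clamp a b x1) - y - (h (clamp a b x0) - y)) with (h (clamp a b x1) - h (clamp a b x0)) by ring.
    apply Hd. apply clamp_in; auto. eapply Rle_lt_trans; [apply clamp_lip; auto| exact Hx1]. }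
  destruct (IVT_cor F l r HF Hlr) as [c [Hc1 Hc2]].
  { unfold F. rewrite !clamp_id by lra. exact Hs. }
  exists c. split; [exact Hc1|]. unfold F in Hc2. rewrite clamp_id in Hc2 by lra. lra.
Qed.

Lemma iter_S (f : R -> R) n x : iter f (S n) x = f (iter f n x).
Proof. reflexivity. Qed.

Lemma iter_add (f : R -> R) p q x : iter f (p + q) x = iter f p (iter f q x).
Proof. induction p as [|p IH]. reflexivity. rewrite Nat.add_succ_l, !iter_S, IH. reflexivity. Qed.

Lemma iter_map f a b : maps_into f a b -> forall n x, a <= x <= b -> a <= iter f n x <= b.
Proof. intros Hm n. induction n as [|n IH]; intros x Hx. exact Hx. rewrite iter_S. apply Hm, IH, Hx. Qed.

Lemma iter_cont f a b : maps_into f a b -> continuous_on f a b -> forall n, continuous_on (iter f n) a b.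
Proof.
  intros Hm Hc n. induction n as [|n IH].
  - intros x Hx eps Heps. exists eps. split; [auto|]. intros y Hy H. exact H.
  - intros x Hx eps Heps.
    destruct (Hc (iter f n x) (iter_map f a b Hm n x Hx) eps Heps) as [d1 [Hd1 H1]].
    destruct (IH x Hx d1 Hd1) as [d2 [Hd2 H2]].
    exists d2. split; auto. intros y Hy Hxy. rewrite !iter_S. apply H1; [apply iter_map; auto | apply H2; auto]. Qed.

Lemma cont_sub_id h a b : continuous_on h a b -> continuous_on (fun t => h t - t) a b.
Proof.
  intros Hc x Hx eps Heps.
  destruct (Hc x Hx (eps/2) ltac:(lra)) as [d1 [Hd1 H1]].
  exists (Rmin d1 (eps/2)). split. apply Rmin_pos; lra.
  intros y Hy Hxy.
  assert (A := H1 y Hy (Rlt_le_trans _ _ _ Hxy (Rmin_l _ _))).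
  assert (B : Rabs (y - x) < eps/2) by (eapply Rlt_le_trans; [exact Hxy| apply Rmin_r]).
  replace (h y - y - (h x - x)) with ((h y - h x) - (y - x)) by ring.
  eapply Rle_lt_trans. apply Rabs_triang. rewrite Rabs_Ropp. lra.
Qed.

Lemma iter_per f k x : iter f k x = x -> forall c, iter f (c * k) x = x.
Proof. intros H c. induction c as [|c IH]. reflexivity. rewrite Nat.mul_succ_l, iter_add, H, IH. reflexivity. Qed.
Theorem lemma8
  (a b : R) (f : R -> R) (m : nat) (p0 e v z z0 d : R)
  (u : nat -> R) (u' : nat -> nat -> R) :
  a <= b ->
  maps_into f a b ->
  continuous_on f a b ->
  (3 <= m)%nat -> Nat.odd m = true ->
  a <= p0 <= b ->
  least_period f m p0 ->
  (forall i : nat, p0 <= iter f i p0) ->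
  e = iter f (m - 1) p0 ->
  p0 <= v < e -> f v = e ->
  v < z < e -> f z = z ->
  is_min (fun x => v <= x <= z /\ iter f 2 x = x) z0 ->
  is_max (fun x => p0 <= x <= v /\ iter f 2 x = z0) d ->
  (forall n : nat, (1 <= n)%nat ->
     is_min (fun x => d <= x <= v /\ iter f (2 * n) x = d) (u n)) ->
  (forall n i : nat, (1 <= n)%nat -> (1 <= i)%nat ->
     is_max (fun x => u (S n) <= x <= u n /\ iter f (2 * n + 2 * i) x = d) (u' n i)) ->
  forall n i : nat, (1 <= n)%nat -> (1 <= i)%nat ->
  forall (x : R) (k : nat), u' n i <= x <= u n -> least_period f k x ->
    (Nat.odd k = true -> (2 * n + 2 * i + 1 < k)%nat) /\
    (Nat.even k = true -> (k <= 2 * n + 2 * i)%nat ->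
       k = (2 * n + 2 * i)%nat \/ k = (2 * n)%nat).
Proof.
  intros Hab Hmap Hcont Hm3 Hmodd Hp0 Hper Hmin He Hv Hfv Hz Hfz Hz0 Hd Hu Hu'
    n i Hn Hi x k Hx Hk.
  destruct Hper as [Hm0 [Hpm Hpmin]].
  assert (Hbnd : forall j y, a <= y <= b -> a <= iter f j y <= b)
    by (apply iter_map; exact Hmap).
  assert (Hc : forall j, continuous_on (iter f j) a b) by (apply iter_cont; assumption).
  assert (Hfe : f e = p0).
  { rewrite He, <- iter_S. replace (S (m-1)) with m by lia. exact Hpm. }
  assert (He_ab : a <= e <= b) by (rewrite He; apply Hbnd; exact Hp0).
  assert (Hg : forall y, iter f 2 y = f (f y)) by reflexivity.
  assert (Gadd : forall p q y, iter f (2*(p+q)) y = iter f (2*p) (iter f (2*q) y)).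
  { intros p q y. rewrite <- iter_add. f_equal. lia. }
  assert (Hp0v : p0 < v).
  { destruct (Rle_lt_or_eq_dec p0 v (proj1 Hv)) as [H|H]; [exact H|]. exfalso.
    assert (H1 : iter f 1 p0 = iter f (m-1) p0).
    { change (iter f 1 p0) with (f p0). rewrite H at 1. rewrite Hfv. exact He. }
    assert (H2 : iter f (m-2) p0 = p0).
    { transitivity (iter f (m-2) (iter f m p0)). rewrite Hpm; reflexivity.
      rewrite <- iter_add.
      replace (m - 2 + m)%nat with ((m-1) + (m-1))%nat by lia.
      rewrite iter_add, <- H1, <- iter_add.
      replace (m - 1 + 1)%nat with m by lia. exact Hpm. }
    apply (Hpmin (m-2)%nat); [lia | exact H2]. }
  destruct Hz0 as [[Hz0r Hz0f] Hz0m].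
  assert (Hvz0 : v < z0).
  { destruct (Rle_lt_or_eq_dec v z0 (proj1 Hz0r)) as [H|H]; [exact H|].
    exfalso. rewrite <- H in Hz0f. rewrite Hg, Hfv, Hfe in Hz0f. lra. }
  destruct Hd as [[Hdr Hdf] Hdm].
  assert (Hv_ab : a <= v <= b) by lra.
  assert (Hz0_ab : a <= z0 <= b) by lra.
  assert (Hd_ab : a <= d <= b) by lra.
  assert (Gz0 : forall l, iter f (2*l) z0 = z0).
  { intro l. induction l as [|l IH]. reflexivity.
    replace (S l) with (1 + l)%nat by lia. rewrite Gadd, IH. exact Hz0f. }
  assert (Gd : forall j, (1 <= j)%nat -> iter f (2*j) d = z0).
  { intros j Hj. replace j with ((j-1) + 1)%nat by lia. rewrite Gadd.
    change (iter f (2*1) d) with (iter f 2 d). rewrite Hdf. apply Gz0. }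
  assert (Hud : forall N, (1 <= N)%nat -> d < u N <= v /\ iter f (2*N) (u N) = d).
  { intros N HN. destruct (Hu N HN) as [[Hr Hf] _]. split; [|exact Hf].
    split; [|lra]. destruct (Rle_lt_or_eq_dec d (u N) (proj1 Hr)) as [H|H]; [exact H|].
    exfalso. rewrite <- H, Gd in Hf by exact HN. lra. }
  assert (Hmono : forall N, (1 <= N)%nat -> u (S N) <= u N).
  { intros N HN. destruct (Hu' N 1%nat HN (le_n 1)) as [[Hr _] _]. lra. }
  assert (Hule : forall N j, (1 <= j)%nat -> (j <= N)%nat -> u N <= u j).
  { intros N j Hj. induction N as [|N IH]; intros HjN. lia.
    destruct (Nat.eq_dec j (S N)) as [E|E]. subst; lra.
    apply Rle_trans with (u N). apply Hmono; lia. apply IH; lia. }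
  assert (LC : forall N s, (1 <= N)%nat -> d <= s < u N -> d < iter f (2*N) s).
  { intros N s HN Hs. destruct (Hud N HN) as [[Hu1 Hu2] _].
    apply Rnot_le_lt. intro H.
    destruct (ivt (iter f (2*N)) a b d s d Hab (Hc _)) as [r [Hr1 Hr2]]; try lra.
    { rewrite Gd by exact HN. nra. }
    destruct (Hu N HN) as [_ Hm]. assert (u N <= r) by (apply Hm; split; [lra|exact Hr2]). lra. }
  assert (LR : forall N t j, (1 <= N)%nat -> d <= t < u N -> (1 <= j)%nat -> (j < N)%nat ->
             v < iter f (2*j) t).
  { intros N t j HN Ht Hj HjN. destruct (Hud N HN) as [[Hu1 Hu2] _].
    apply Rnot_le_lt. intro H.
    destruct (ivt (iter f (2*j)) a b d t v Hab (Hc _)) as [r [Hr1 Hr2]]; try lra.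
    { rewrite Gd by exact Hj. nra. }
    assert (E : iter f (2*(S j)) r = p0).
    { replace (S j) with (1 + j)%nat by lia. rewrite Gadd, Hr2.
      change (iter f (2*1) v) with (f (f v)). rewrite Hfv, Hfe. reflexivity. }
    assert (Hl := Hule N (S j) ltac:(lia) ltac:(lia)).
    assert (C := LC (S j) r ltac:(lia) ltac:(lra)). lra. }
  assert (LU : forall w, d < w < z0 -> iter f 2 w < z0).
  { intros w Hw. destruct (Rle_lt_dec w v) as [H|H].
    - apply Rnot_le_lt. intro H1.
      destruct (ivt (iter f 2) a b w v z0 Hab (Hc _)) as [s [Hs1 Hs2]]; try lra.
      { rewrite (Hg v), Hfv, Hfe. nra. }
      assert (s <= d) by (apply Hdm; split; [lra|exact Hs2]). lra.
    - destruct (Rlt_le_dec (iter f 2 w) w) as [H1|H1]; [lra|]. exfalso.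
      destruct (ivt (fun t => iter f 2 t - t) a b v w 0 Hab (cont_sub_id _ _ _ (Hc 2%nat)))
        as [r [Hr1 Hr2]]; try lra.
      { rewrite (Hg v), Hfv, Hfe. nra. }
      assert (z0 <= r) by (apply Hz0m; split; lra). lra. }
  assert (LF : forall t, d < t <= v -> z0 < f t).
  { assert (Hw : z0 <= f z0).
    { destruct (Rle_lt_dec z0 (f z0)) as [H|H]; [exact H|]. exfalso.
      destruct (ivt (fun t => f t - t) a b v z0 0 Hab (cont_sub_id _ _ _ Hcont))
        as [r [Hr1 Hr2]]; try lra.
      { rewrite Hfv. nra. }
      assert (Hfr : f r = r) by lra.
      assert (z0 <= r) by (apply Hz0m; split; [lra| rewrite Hg, !Hfr; reflexivity]).
      assert (r = z0) by lra. subst r. lra. }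
    destruct (ivt f a b z0 e z0 Hab Hcont) as [c [Hc1 Hc2]]; try lra.
    { rewrite Hfe. nra. }
    intros t Ht. apply Rnot_le_lt. intro H.
    destruct (ivt f a b t v c Hab Hcont) as [s [Hs1 Hs2]]; try lra.
    { rewrite Hfv. nra. }
    assert (s <= d) by (apply Hdm; split; [lra| rewrite Hg, Hs2; exact Hc2]). lra. }
  destruct Hk as [Hk0 [Hkx Hkmin]].
  destruct (Hu' n i Hn Hi) as [[Hur' Hu'f] Hu'm].
  assert (Hxd : d < x) by (pose proof (proj1 (proj1 (Hud (S n) ltac:(lia)))); pose proof (Hmono n Hn); lra).
  assert (Hxv : x <= v) by (pose proof (Hud n Hn); lra).
  assert (LP : forall j, iter f (2*j) x <> d).
  { intros j Hj.
    assert (E1 : iter f (2*(S j)) x = z0).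
    { replace (S j) with (1 + j)%nat by lia. rewrite Gadd, Hj. exact Hdf. }
    assert (HM : (S j <= S j * k)%nat) by nia.
    assert (E2 : iter f (2*(S j * k)) x = z0).
    { replace (S j * k)%nat with ((S j * k - S j) + S j)%nat by lia.
      rewrite Gadd, E1. apply Gz0. }
    rewrite Nat.mul_assoc in E2. rewrite iter_per in E2 by exact Hkx. lra. }
  assert (Hxu : x < u n).
  { destruct (Rle_lt_or_eq_dec x (u n) (proj2 Hx)) as [H|H]; [exact H|].
    exfalso. apply (LP n). rewrite H. apply (Hud n Hn). }
  set (y := iter f (2*n) x).
  assert (Hy1 : d < y) by (apply LC; [exact Hn| lra]).
  assert (Hui := Hud i Hi).
  assert (Hy2 : y <= u i).
  { apply Rnot_lt_le. intro H. pose proof (Hud n Hn) as Hun.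
    destruct (ivt (iter f (2*n)) a b x (u n) (u i) Hab (Hc _)) as [t [Ht1 Ht2]]; try lra.
    { change (iter f (2*n) x) with y. rewrite (proj2 Hun). nra. }
    assert (E : iter f (2*n + 2*i) t = d).
    { replace (2*n+2*i)%nat with (2*i + 2*n)%nat by lia. rewrite iter_add, Ht2. apply Hui. }
    assert (t <= u' n i) by (apply Hu'm; split; [lra| exact E]).
    assert (t = x) by lra. subst t. fold y in Ht2. lra. }
  assert (Hy3 : y < u i).
  { destruct (Rle_lt_or_eq_dec y (u i) Hy2) as [H|H]; [exact H|].
    exfalso. apply (LP (i + n)%nat). rewrite Gadd. fold y. rewrite H. apply Hui. }
  split.
  - intros Hko. apply Nat.odd_spec in Hko. destruct Hko as [h Hh].
    destruct (Nat.lt_ge_cases (2*n+2*i+1) k) as [Hlt|Hge]; [exact Hlt|]. exfalso.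
    assert (Hlow : forall j, (j <= n + i)%nat -> d < iter f (2*j) x).
    { intros j Hj. destruct (Nat.eq_dec j 0) as [E|E]. subst j. exact Hxd.
      destruct (Nat.le_gt_cases j n) as [Hjn|Hjn].
      - apply LC. lia. split. lra. eapply Rlt_le_trans. exact Hxu. apply Hule; lia.
      - replace j with ((j - n) + n)%nat by lia. rewrite Gadd. fold y.
        apply LC. lia. split. lra. eapply Rlt_le_trans. exact Hy3. apply Hule; lia. }
    assert (Hup : forall j, (j <= S (n + i))%nat -> iter f (2*j) x < z0).
    { intro j. induction j as [|j IH]; intros Hj. simpl. change (iter f 0 x) with x. lra.
      replace (S j) with (1 + j)%nat by lia. rewrite Gadd. apply LU.
      split. apply Hlow. lia. apply IH. lia. }
    assert (Efx : iter f (2 * S h) x = f x).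
    { replace (2 * S h)%nat with (S k) by lia. rewrite iter_S, Hkx. reflexivity. }
    assert (A := Hup (S h) ltac:(lia)). rewrite Efx in A.
    assert (B := LF x ltac:(lra)). lra.
  - intros Hke Hkle. apply Nat.even_spec in Hke. destruct Hke as [q Hq].
    assert (Hqx : iter f (2*q) x = x) by (rewrite <- Hq; exact Hkx).
    destruct (Nat.lt_trichotomy q n) as [H1|[H1|H1]].
    + exfalso. assert (A := LR n x q Hn ltac:(lra) ltac:(lia) H1). lra.
    + right. lia.
    + destruct (Nat.eq_dec q (n + i)) as [H2|H2]. left. lia.
      exfalso.
      assert (A := LR i y (q - n)%nat Hi ltac:(lra) ltac:(lia) ltac:(lia)).
      unfold y in A. rewrite <- Gadd in A. replace (q - n + n)%nat with q in A by lia. lra.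
Qed.
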